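(* Let $E_0$ be a vertex of a weighted tree and let $\Delta$ be a chain of $(-2)$-vertices $F_1,\dots,F_n$ ($F_j$ adjacent to $F_{j+1}$) such that $E_0$ is adjacent to $F_k$ and to no other vertex of $\Delta$, where $k\ge1$ and $n\ge 2k-1$ (configuration $A_n^k$). Let $(m^{(1)},m^{(2)},\dots)$ be the multiplicity sequence of $\Delta$ at $E_0$. Then: (i) if $k=1$, the sequence is periodic: $(1^n,0,1^n,0,\dots)$; (ii) if $k\ge2$, write $n=lk+r+(k-1)$ with $l\ge1$, $0\le r\le k-1$. If $r<k-1$ the sequence begins $(k^l,r)$; if $r=k-1$ and $k\ge3$ it begins $(k^l,k-1,1)$; if $k=2$ and $r=1$ (so $n=2l+2$) it begins $(2^l,1,1,2^l,0)$. Here $a^l$ denotes $l$ consecutive entries equal to $a$.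
   Context: Let $E_0$ be a vertex and $\Delta$ a connected set of $(-2)$-vertices (each $F\in\Delta$ has $F\cdot F=-2$, adjacent vertices intersect with $1$, others with $0$), with $E_0$ adjacent to exactly one vertex $f\in\Delta$. The multiplicity sequence of $\Delta$ at $E_0$ is defined as follows. Let $\Gamma^{(1)}=\Delta$. Given a connected subset $\Gamma^{(s)}\subseteq\Delta$ containing $f$, let $Y^{(s)}$ be the smallest nonzero cycle supported on $\Gamma^{(s)}$ with $(E_0+Y^{(s)})\cdot F\le 0$ for all $F\in\Gamma^{(s)}$; if $\Gamma^{(s)}$ is empty put $Y^{(s)}=0$. Put $Z^{(1)}=E_0+Y^{(1)}$ and $Z^{(s+1)}=Z^{(s)}+E_0+Y^{(s+1)}$, where $\Gamma^{(s+1)}$ is the connected component containing $f$ of the set $\{F\in\Delta: Z^{(s)}\cdot F=0\}$ (empty if $f$ is not in this set). Then $m^{(s)}$ is the coefficient of $Y^{(s)}$ at $f$. *)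

(* Defs.v *)
From Stdlib Require Import ClassicalEpsilon.
From mathcomp Require Import all_boot all_order all_algebra.
Set Implicit Arguments. Unset Strict Implicit. Unset Printing Implicit Defensive.
Import Order.TTheory GRing.Theory Num.Theory.

(* General setting: the vertices of Delta form a finite type V with a
   (symmetric, irreflexive) adjacency relation adj; every vertex of Delta is
   a (-2)-vertex; E_0 is adjacent to exactly the vertex f of Delta.
   A cycle supported on Delta is a function V -> nat (coefficients). *)
Section MultSeq.
Variables (V : finType) (adj : rel V) (f : V).

Local Open Scope ring_scope.

Definition inter (G F : V) : int :=
  if G == F then -2 else if adj G F then 1 else 0.

(* (a E_0 + Y) . F  for F in Delta *)
Definition zdot (a : nat) (Y : V -> nat) (F : V) : int :=
  ((a * (F == f))%N)%:Z + \sum_(G : V) (Y G)%:Z * inter G F.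

Definition admissibleY (Gam : {set V}) (Y : V -> nat) : Prop :=
  (forall v, v \notin Gam -> Y v = 0%N) /\ (exists v, Y v <> 0%N) /\
  (forall F, F \in Gam -> zdot 1 Y F <= 0).

Definition smallestY (Gam : {set V}) (Y : V -> nat) : Prop :=
  admissibleY Gam Y /\ forall Y', admissibleY Gam Y' -> forall v, (Y v <= Y' v)%N.

Definition minY (Gam : {set V}) : V -> nat :=
  if Gam == set0 then (fun _ => 0%N)
  else epsilon (inhabits (fun _ => 0%N)) (smallestY Gam).

Definition compf (S : {set V}) : {set V} :=
  [set y | (f \in S) && connect (fun a b => [&& a \in S, b \in S & adj a b]) f y].

(* state s = (Gamma^(s+1), Y^(1) + ... + Y^(s)) ;
   Z^(s) = s E_0 + Y^(1) + ... + Y^(s) *)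
Fixpoint state (s : nat) : {set V} * (V -> nat) :=
  match s with
  | 0 => (setT, fun _ => 0%N)
  | s'.+1 =>
      let acc' := fun v => ((state s').2 v + minY (state s').1 v)%N in
      (compf [set F | zdot s'.+1 acc' F == 0], acc')
  end.

(* mseq s = m^(s+1)  (0-based indexing of the multiplicity sequence) *)
Definition mseq (s : nat) : nat := minY (state s).1 f.

End MultSeq.

(* The chain F_1 - ... - F_n, with F_j represented by the ordinal j-1. *)
Definition chain_adj (n : nat) : rel 'I_n :=
  fun i j => ((nat_of_ord i).+1 == j) || ((nat_of_ord j).+1 == i).

(* Main.v *)
Require Import Defs.
From mathcomp Require Import all_boot all_order all_algebra.
Require Import Defs.
From mathcomp Require Import all_boot all_order all_algebra zify.
From Stdlib Require Import ClassicalEpsilon.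
Import Order.TTheory GRing.Theory Num.Theory.
Set Implicit Arguments. Unset Strict Implicit. Unset Printing Implicit Defensive.

Definition Tp (a b c i : nat) : nat :=
  if i < a then 0 else if i < a + c then i.+1 - a else if i < b - c then c else b - i.

Lemma Tp_id (a b f c x i : nat) : a <= f < b ->
  ((c == f.+1 - a) && (f.+1 - a <= b - f) && (x == b - c)) ||
  ((c == b - f) && (b - f <= f.+1 - a) && (x == a + c - 1)) ->
  (i == f) + (0 < i) * Tp a b c (i.-1) + Tp a b c i.+1 + (i == x) =
  2 * Tp a b c i + (i.+1 == a) + (i == b).
Proof.
move=> /andP[h1 h2] /orP[/andP[/andP[/eqP hc hpq] /eqP hx]|/andP[/andP[/eqP hc hpq] /eqP hx]];
rewrite /Tp; case: i => [|i] /=;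
repeat (case: ifP => ?); repeat (case: eqP => ?); lia.
Qed.

Section Conc.
Local Open Scope ring_scope.
Variables (H : nat -> int) (L f' : nat).
Hypotheses (hf1 : (1 <= f')%N) (hfL : (f' <= L)%N) (H0 : H 0 = 0) (HL : H L.+1 = 0)
  (Hc : forall j, (1 <= j <= L)%N -> H j.-1 + H j.+1 + (j == f')%:R <= 2 * H j).

Definition dd j := H j.+1 - H j.

Lemma mon i j : (i <= j <= L)%N -> dd j + ((i < f') && (f' <= j))%N%:R <= dd i.
Proof.
elim: j => [|j IH] /andP[hij hjL].
  have -> : i = 0%N by lia.
  rewrite /= (_ : (f' <= 0)%N = false) ?andbF //=; [lia | lia].
case: (ltnP j i) => hji.
  have -> : i = j.+1 by lia.
  rewrite (_ : ((j.+1 < f') && (f' <= j.+1))%N = false); [rewrite /=; lia|].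
  by apply/negbTE; apply/negP => /andP [] ; lia.
have {}IH := IH ltac:(lia).
have := @Hc j.+1; rewrite /= => /(_ ltac:(lia)).
move: IH; rewrite /dd.
case: (ltnP i f') => ?; case: (leqP f' j) => ?; case: (leqP f' j.+1) => ?; case: eqP => ?; rewrite /=; lia.
Qed.

Lemma mon0 i j : (i <= j <= L)%N -> ((j < f') || (f' <= i))%N -> dd j <= dd i.
Proof.
move=> h1 h2; have := @mon i j h1.
case: (ltnP i f') => ?; case: (leqP f' j) => ? /=; lia.
Qed.

Lemma mon1 i j : (i < f')%N -> (f' <= j <= L)%N -> dd j + 1 <= dd i.
Proof.
move=> h1 /andP[h2 h3]; have := @mon i j ltac:(lia).
rewrite h1 h2 /=; lia.
Qed.

Lemma up1 i j : (i <= j)%N -> (forall t, (i <= t < j)%N -> 1 <= dd t) -> H i + (j - i)%N%:Z <= H j.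
Proof.
elim: j => [|j IH] hij hd.
  have E : i = 0%N by lia.
  by rewrite E ?subnn; lia.
case: (ltnP j i) => hji.
  have E : i = j.+1 by lia.
  by rewrite E ?subnn; lia.
have := IH hji (fun t ht => hd t ltac:(lia)); have := hd j ltac:(lia); rewrite /dd; lia.
Qed.

Lemma up0 i j : (i <= j)%N -> (forall t, (i <= t < j)%N -> 0 <= dd t) -> H i <= H j.
Proof.
elim: j => [|j IH] hij hd.
  have E : i = 0%N by lia.
  by rewrite E ?subnn; lia.
case: (ltnP j i) => hji.
  have E : i = j.+1 by lia.
  by rewrite E ?subnn; lia.
have := IH hji (fun t ht => hd t ltac:(lia)); have := hd j ltac:(lia); rewrite /dd; lia.
Qed.

Lemma dn0 i j : (i <= j)%N -> (forall t, (i <= t < j)%N -> dd t <= 0) -> H j <= H i.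
Proof.
elim: j => [|j IH] hij hd.
  have E : i = 0%N by lia.
  by rewrite E ?subnn; lia.
case: (ltnP j i) => hji.
  have E : i = j.+1 by lia.
  by rewrite E ?subnn; lia.
have := IH hji (fun t ht => hd t ltac:(lia)); have := hd j ltac:(lia); rewrite /dd; lia.
Qed.

Lemma dn1 i j : (i <= j)%N -> (forall t, (i <= t < j)%N -> dd t <= -1) -> H j + (j - i)%N%:Z <= H i.
Proof.
elim: j => [|j IH] hij hd.
  have E : i = 0%N by lia.
  by rewrite E ?subnn; lia.
case: (ltnP j i) => hji.
  have E : i = j.+1 by lia.
  by rewrite E ?subnn; lia.
have := IH hji (fun t ht => hd t ltac:(lia)); have := hd j ltac:(lia); rewrite /dd; lia.
Qed.

Lemma concave_lb j : (1 <= j <= L)%N ->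
  (minn (minn j (L.+1 - j)) (minn f' (L.+1 - f')))%N%:Z <= H j.
Proof.
move=> /andP[j1 jL].
case: (leqP j f') => hjf.
- case: (lerP 1 (dd j.-1)) => hd.
  + have := @up1 0 j (leq0n j) (fun t ht => le_trans hd (@mon0 t j.-1 ltac:(lia) ltac:(lia))).
    rewrite H0; lia.
  + have h1 := @dn0 j f' hjf (fun t ht => ltac:(have := @mon0 j.-1 t ltac:(lia) ltac:(lia); lia)).
    have h2 := @dn1 f' L.+1 ltac:(lia) (fun t ht => ltac:(have := @mon1 j.-1 t ltac:(lia) ltac:(lia); lia)).
    move: h2; rewrite HL; lia.
- case: (lerP (dd j) (-1)) => hd.
  + have := @dn1 j L.+1 ltac:(lia) (fun t ht => le_trans (@mon0 j t ltac:(lia) ltac:(lia)) hd).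
    rewrite HL; lia.
  + have h1 := @up0 f' j ltac:(lia) (fun t ht => ltac:(have := @mon0 t j ltac:(lia) ltac:(lia); lia)).
    have h2 := @up1 0 f' (leq0n _) (fun t ht => ltac:(have := @mon1 t j ltac:(lia) ltac:(lia); lia)).
    move: h2; rewrite H0; lia.
Qed.
End Conc.

Section Chain.
Variables (n : nat) (f : 'I_n.+1).
Local Notation adj := (@chain_adj n.+1).

Definition ext (Y : 'I_n.+1 -> nat) (i : nat) : nat :=
  if (i < n.+1)%N then Y (inord i) else 0%N.

Lemma ext_ord Y (F : 'I_n.+1) : ext Y F = Y F.
Proof. by rewrite /ext ltn_ord inord_val. Qed.

Local Open Scope ring_scope.

Lemma sum_ind (Y : 'I_n.+1 -> nat) c :
  \sum_(G : 'I_n.+1) (Y G)%:Z * (nat_of_ord G == c)%:R = (ext Y c)%:Z.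
Proof.
rewrite /ext; case: ifP => hc.
  rewrite (bigD1 (inord c)) //= inordK // eqxx mulr1 big1 ?addr0 // => G hG.
  case: eqP; rewrite ?mulr0 // => E; move: hG; rewrite -E.
  by rewrite (_ : inord (val G) = G) ?eqxx // inord_val.
rewrite big1 // => G _; case: eqP; rewrite ?mulr0 // => E.
by move: (ltn_ord G); rewrite E hc.
Qed.

Lemma inter_pw (G F : 'I_n.+1) :
  inter adj G F = -2 * (nat_of_ord G == nat_of_ord F)%:R + ((nat_of_ord G).+1 == F)%:R + ((nat_of_ord F).+1 == G)%:R.
Proof.
rewrite /inter /chain_adj; change (G == F) with (nat_of_ord G == nat_of_ord F).
move: (nat_of_ord G) (nat_of_ord F) => g h.
have [E1|E1] := eqVneq g h; have [E2|E2] := eqVneq g.+1 h; have [E3|E3] := eqVneq h.+1 g; rewrite /=; lia.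
Qed.

Lemma zdot_chain a Y (F : 'I_n.+1) :
  zdot adj f a Y F = (a * (F == f))%N%:Z - 2 * (Y F)%:Z
    + (if (0 < val F)%N then ext Y (val F).-1 else 0%N)%:Z + (ext Y (val F).+1)%:Z.
Proof.
rewrite /zdot -!addrA; congr (_ + _).
under eq_bigr do rewrite inter_pw !mulrDr.
rewrite !big_split /= -addrA; congr (_ + _).
  rewrite -mulNr -(ext_ord Y F) -sum_ind mulr_sumr; apply: eq_bigr => G _; rewrite mulrCA //.
congr (_ + _).
  case E: (nat_of_ord F) => [|h] /=.
    by rewrite big1 // => G _; rewrite mulr0.
  by under eq_bigr do rewrite eqSS; rewrite sum_ind.
by under eq_bigr do rewrite eq_sym; rewrite sum_ind.
Qed.

Definition Gx (x : nat) : {set 'I_n.+1} :=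
  [set F : 'I_n.+1 | (nat_of_ord f != x) && ((x < f)%N == (x < F)%N) && (nat_of_ord F != x)].

Section Comp.
Variable x : nat.
Let S := [set F : 'I_n.+1 | nat_of_ord F != x].
Let e := fun a b : 'I_n.+1 => [&& a \in S, b \in S & adj a b].

Lemma e_sym : symmetric e.
Proof. by move=> a b; rewrite /e; case: (a \in S); case: (b \in S) => //=; rewrite /chain_adj orbC. Qed.

Lemma conn_step d (u v : 'I_n.+1) : nat_of_ord v = (u + d)%N ->
  (forall w : 'I_n.+1, (u <= w <= v)%N -> nat_of_ord w != x) -> connect e u v.
Proof.
elim: d v => [|d IH] v hv hw.
  by rewrite addn0 in hv; rewrite (_ : v = u) ?connect0 //; apply: val_inj.
have hlt : (u + d < n.+1)%N by move: (ltn_ord v); lia.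
have h1 : connect e u (inord (u + d)).
  apply: IH; first by rewrite inordK.
  move=> w hw'; apply: hw; move: hw'; rewrite inordK //; lia.
apply: connect_trans h1 _.
apply: connect1; rewrite /e /S !inE /chain_adj inordK // hv addnS eqxx /=.
rewrite !andbT; apply/andP; split.
  rewrite (_ : u + d = nat_of_ord (@inord n (u + d)))%N; last by rewrite inordK.
  by apply: hw; rewrite inordK //; lia.
by rewrite -addnS -hv; apply: hw; lia.
Qed.

Lemma conn_between (u v : 'I_n.+1) :
  (forall w : 'I_n.+1, (minn u v <= w <= maxn u v)%N -> nat_of_ord w != x) -> connect e u v.
Proof.
move=> hw; case: (leqP u v) => huv.
  apply: (@conn_step (v - u)); first lia.
  by move=> w hw'; apply: hw; lia.
rewrite (sym_connect_sym e_sym).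
apply: (@conn_step (u - v)); first lia.
by move=> w hw'; apply: hw; lia.
Qed.

Lemma compf_excl : compf adj f S = Gx x.
Proof.
apply/setP => y; rewrite /compf /Gx !inE.
case: eqP => hfx /=; first by [].
rewrite -/e; apply/idP/idP.
  pose P (v : 'I_n.+1) := ((x < f)%N == (x < v)%N) && (nat_of_ord v != x).
  have Pf : P f by rewrite /P eqxx; apply/eqP.
  have step : forall a b, P a -> e a b -> P b.
    move=> a b; rewrite /P /e /S !inE /chain_adj => /andP[/eqP ha hax] /and3P[_ hbx hab].
    rewrite hbx andbT; apply/eqP; rewrite ha; move: hax hbx hab.
    move=> /eqP hax /eqP hbx /orP[] /eqP; lia.
  have gen : forall p a, P a -> path e a p -> P (last a p).
    elim=> [|c p IH] a Pa /=; first by move=> _.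
    move=> /andP[hac hp]; exact: IH (step _ _ Pa hac) hp.
  by case/connectP => p hp ->; apply: gen.
move=> /andP[/eqP hxy hyx]; apply: conn_between => w hw; apply/eqP => E.
move: (ltn_ord w) hw hxy hyx; rewrite E; lia.
Qed.
End Comp.
End Chain.

Local Open Scope ring_scope.

Lemma zdot_add (V : finType) (adj : rel V) (f : V) a b (Y1 Y2 : V -> nat) F :
  zdot adj f (a + b)%N (fun v => (Y1 v + Y2 v)%N) F = (zdot adj f a Y1 F + zdot adj f b Y2 F)%R.
Proof.
rewrite /zdot mulnDl PoszD.
rewrite (_ : \sum_G (Posz (Y1 G + Y2 G)%N * inter adj G F) =
   (\sum_G ((Y1 G)%:Z * inter adj G F) + \sum_G ((Y2 G)%:Z * inter adj G F))%R).
  by rewrite -!addrA; congr (_ + _)%R; rewrite addrCA.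
by rewrite -big_split /=; apply: eq_bigr => G _; rewrite PoszD mulrDl.
Qed.

Lemma zdot_ext (V : finType) (adj : rel V) (f : V) a (Y Y' : V -> nat) F :
  (forall v, Y v = Y' v) -> zdot adj f a Y F = zdot adj f a Y' F.
Proof. by move=> h; rewrite /zdot; congr (_ + _)%R; apply: eq_bigr => G _; rewrite h. Qed.

Section Dyn.
Variables (n : nat) (f : 'I_n.+1).
Local Notation adj := (@chain_adj n.+1).

Definition Iv (a b : nat) : {set 'I_n.+1} := [set F : 'I_n.+1 | (a <= F < b)%N].

Section Seg.
Variables (a b : nat).
Hypotheses (haf : (a <= f)%N) (hfb : (f < b)%N) (hbn : (b <= n.+1)%N).
Let p := (f.+1 - a)%N.
Let q := (b - f)%N.
Let c := minn p q.
Let x' := if (p <= q)%N then (b - p)%N else (a + q - 1)%N.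
Let Y0 := fun v : 'I_n.+1 => Tp a b c v.

Lemma ext_Y0 i : ext Y0 i = Tp a b c i.
Proof.
rewrite /ext /Y0; case: ifP => hi; first by rewrite inordK.
rewrite /Tp /c /p /q; case: ifP => ? //; case: ifP => ?; [lia|]; case: ifP => ?; lia.
Qed.

Lemma zdot_Y0 (F : 'I_n.+1) :
  zdot adj f 1 Y0 F = ((nat_of_ord F).+1 == a)%:Z + (nat_of_ord F == b)%:Z - (nat_of_ord F == x')%:Z.
Proof.
rewrite zdot_chain !ext_Y0 /Y0.
have := @Tp_id a b f c x' F ltac:(lia).
rewrite /c /x' /p /q; case: (leqP (f.+1 - a) (b - f)) => hpq.
  rewrite !eqxx /= => /(_ isT).
  rewrite -[\val F]/(nat_of_ord F) -[F == f]/(nat_of_ord F == nat_of_ord f) mul1n; case: (nat_of_ord F) => [|i] /=; lia.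
rewrite !eqxx andbF /= (_ : (b - f <= f.+1 - a)%N) /=; last lia.
move=> /(_ isT).
rewrite -[\val F]/(nat_of_ord F) -[F == f]/(nat_of_ord F == nat_of_ord f) mul1n; case: (nat_of_ord F) => [|i] /=; lia.
Qed.

Lemma Tp_out (v : nat) : ~~ (a <= v < b)%N -> Tp a b c v = 0%N.
Proof. by rewrite /Tp /c /p /q => hv; case: ifP => ? //; case: ifP => ?; [lia|]; case: ifP => ?; lia. Qed.

Lemma Y0_f : Y0 f = c.
Proof.
rewrite /Y0 /Tp /c /p /q; case: (leqP (f.+1 - a) (b - f)) => h; rewrite ifF; try lia;
case: ifP => ?; try lia; case: ifP => ?; lia.
Qed.

Lemma Y0_adm : admissibleY adj f (Iv a b) Y0.
Proof.
split; [|split].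
- by move=> v; rewrite inE => hv; apply: Tp_out.
- by exists f; rewrite Y0_f /c /p /q; lia.
- move=> F; rewrite inE => /andP[h1 h2]; rewrite zdot_Y0.
  case: eqP => ?; [lia|]; case: eqP => ?; [lia|]; lia.
Qed.

Lemma Tp_le (v : nat) : (a <= v < b)%N ->
  (Tp a b c v <= minn (minn (v - a).+1 ((b - a).+1 - (v - a).+1)) (minn (f.+1 - a) ((b - a).+1 - (f.+1 - a))))%N.
Proof.
move=> /andP[h1 h2]; rewrite !leq_min /Tp /c /p /q; case: (leqP (f.+1 - a) (b - f)) => h;
case: ifP => ?; try lia; case: ifP => ?; try lia; case: ifP => ?; lia.
Qed.

Lemma Y0_lb Y' : admissibleY adj f (Iv a b) Y' -> forall v, (Y0 v <= Y' v)%N.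
Proof.
move=> [hsup [_ hz]] v.
case: (boolP (v \in Iv a b)) => hv; last by rewrite /Y0 Tp_out //; move: hv; rewrite inE.
move: hv; rewrite inE => /andP[hv1 hv2].
pose H := fun j => if j is j'.+1 then (ext Y' (a + j'))%:Z else 0.
have HL : H (b - a).+1 = 0.
  rewrite /H /ext; case: ifP => hb //; rewrite hsup // inE inordK; [lia|lia].
have Hc : forall j, (1 <= j <= b - a)%N -> H j.-1 + H j.+1 + (j == f.+1 - a)%N%:R <= 2 * H j.
  move=> [|j] // hj; pose F : 'I_n.+1 := inord (a + j).
  have hi : (a + j < n.+1)%N by lia.
  have hF : F \in Iv a b by rewrite inE inordK //; lia.
  have := hz F hF; rewrite zdot_chain /= inordK //.
  have Eb : (F == f) = (j.+1 == f.+1 - a)%N.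
    by rewrite -val_eqE /= inordK //; apply/eqP/eqP; lia.
  have EY : Y' F = ext Y' (a + j) by rewrite /ext hi.
  rewrite Eb EY /H -addnS; case: j {hj F hF Eb EY hi} => [|j] /=.
    rewrite addn0 mul1n; case: ifP => _; lia.
  rewrite addnS /= mul1n; lia.
have key := @concave_lb H (b - a) (f.+1 - a) ltac:(lia) ltac:(lia) erefl HL Hc (v - a).+1 ltac:(lia).
have := Tp_le (v:=v) ltac:(lia).
move: key; rewrite /H (_ : (a + (v - a))%N = v); last lia.
rewrite /Y0 -(ext_ord Y'); move=> h1 h2; rewrite -lez_nat; apply: le_trans h1; by rewrite lez_nat.
Qed.

Lemma minY_Iv v : minY adj f (Iv a b) v = Tp a b c v.
Proof.
rewrite /minY.
have ne : Iv a b != set0 by apply/set0Pn; exists f; rewrite inE; lia.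
rewrite (negbTE ne).
have ex : exists Y, smallestY adj f (Iv a b) Y by exists Y0; split; [exact: Y0_adm|exact: Y0_lb].
have [hadm hmin] := epsilon_spec (inhabits (fun _ : 'I_n.+1 => 0%N)) _ ex.
by apply/eqP; rewrite eqn_leq (hmin Y0 Y0_adm v) (Y0_lb hadm v).
Qed.
End Seg.

Definition sA x := if (x < f)%N then x.+1 else 0%N.
Definition sB x := if (x < f)%N then n.+1 else x.
Definition pp x := (f.+1 - sA x)%N.
Definition qq x := (sB x - f)%N.
Definition nxt x := if x == nat_of_ord f then n.+1
  else if (pp x <= qq x)%N then (sB x - pp x)%N else (sA x + qq x - 1)%N.
Definition mv x := if x == nat_of_ord f then 0%N else minn (pp x) (qq x).

Definition Inv s x := [/\ (x <= n.+1)%N,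
  (forall F, zdot adj f s (state adj f s).2 F = - Posz (nat_of_ord F == x)) &
  (state adj f s).1 = Gx f x].

Lemma Inv0 : Inv 0 n.+1.
Proof.
split=> //.
  move=> F; rewrite /zdot /= mul0n big1 ?addr0; last by move=> G _; rewrite mul0r.
  by rewrite (_ : (nat_of_ord F == n.+1) = false) //; apply/negbTE; move: (ltn_ord F); lia.
apply/setP => F; rewrite /Gx !inE /=; move: (ltn_ord F) (ltn_ord f).
do 3 (case: eqP => ?); case: ltnP => ?; case: ltnP => ? //=; lia.
Qed.

Lemma Inv_step s x : Inv s x -> Inv s.+1 (nxt x) /\ mseq adj f s = mv x.
Proof.
move=> [hx hz hG].
set st := state adj f s.
have Est : state adj f s.+1 = (compf adj f [set F | zdot adj f s.+1
    (fun v => (st.2 v + minY adj f st.1 v)%N) F == 0],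
    (fun v => (st.2 v + minY adj f st.1 v)%N)) by [].
have zadd : forall F, zdot adj f s.+1 (fun v => (st.2 v + minY adj f st.1 v)%N) F =
   zdot adj f s st.2 F + zdot adj f 1 (minY adj f st.1) F by move=> F; rewrite -(zdot_add _ _ s 1) addn1.
case: (eqVneq x (nat_of_ord f)) => hxf.
  have G0 : st.1 = set0 by rewrite hG; apply/setP=> F; rewrite /Gx !inE hxf eqxx.
  have M0 : forall v, minY adj f st.1 v = 0%N by move=> v; rewrite /minY G0 eqxx.
  split; last by rewrite /mseq -/st M0 /mv hxf eqxx.
  have Z0 : forall F, zdot adj f s.+1 (fun v => (st.2 v + minY adj f st.1 v)%N) F = 0.
    move=> F; rewrite zadd hz (@zdot_ext _ _ _ _ _ _ F M0) /zdot big1; last by move=> G _; rewrite mul0r.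
    rewrite mul1n addr0 hxf; rewrite -[F == f]/(nat_of_ord F == nat_of_ord f); lia.
  rewrite /nxt hxf eqxx; split => //.
    by move=> F; rewrite Est /= Z0 (_ : (nat_of_ord F == n.+1) = false) //; apply/negbTE; move: (ltn_ord F); lia.
  rewrite Est /= -(compf_excl f n.+1); congr (compf _ _); apply/setP => F; rewrite !inE Z0 eqxx.
  by move: (ltn_ord F); lia.
have hab : (sA x <= f < sB x)%N by rewrite /sA /sB; move: hxf (ltn_ord f); case: (ltnP x f) => ?; move/eqP => ? ?; lia.
have hbn : (sB x <= n.+1)%N by rewrite /sB; case: (ltnP x f) => ?; lia.
have GI : st.1 = Iv (sA x) (sB x).
  rewrite hG; apply/setP => F; rewrite /Gx /Iv !inE /sA /sB; move: hxf (ltn_ord F) (ltn_ord f) hx.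
  move/eqP => hxf2 hF hf hx2.
  rewrite (_ : (nat_of_ord f != x) = true) ?hF; last by apply/eqP => E; apply: hxf2.
  case: (ltnP x f) => h1; case: (ltnP x F) => h2; case: (ltnP F x) => h3;
    case: (nat_of_ord F =P x) => h4 //=; exfalso; lia.
have MI : forall v, minY adj f st.1 v = Tp (sA x) (sB x) (minn (f.+1 - sA x) (sB x - f)) v.
  by move=> v; rewrite GI minY_Iv //; case/andP: hab.
split; last first.
  rewrite /mseq -/st MI /mv (negbTE hxf) /pp /qq.
  by have := Y0_f (a := sA x) (b := sB x) ltac:(case/andP: hab; done) ltac:(case/andP: hab; done) hbn.
have ZI : forall F, zdot adj f s.+1 (fun v => (st.2 v + minY adj f st.1 v)%N) F = - Posz (nat_of_ord F == nxt x).
  move=> F; rewrite zadd hz (@zdot_ext _ _ _ _ _ _ F MI).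
  rewrite (zdot_Y0 (a := sA x) (b := sB x)) ?(andP hab).1 ?(andP hab).2 //.
  rewrite /nxt (negbTE hxf) /pp /qq.
  have E : (((nat_of_ord F).+1 == sA x) + (nat_of_ord F == sB x))%N = (nat_of_ord F == x) :> nat.
    rewrite /sA /sB; move: (ltn_ord F) (ltn_ord f) hxf => hF hf /eqP hxf'.
    case: (ltnP x f) => h1 /=; do ?(case: eqP => ?) => /=; lia.
  move: E; case: (nat_of_ord F == x); case: ((nat_of_ord F).+1 == sA x); case: (nat_of_ord F == sB x) => //= E; lia.
split.
- rewrite /nxt (negbTE hxf) /pp /qq; move: hab hbn; case: (leqP (f.+1 - sA x) (sB x - f)) => ? /andP[? ?] ?; lia.
- by move=> F; rewrite Est /= ZI.
rewrite Est /= -(compf_excl f (nxt x)); congr (compf _ _); apply/setP => F; rewrite !inE ZI.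
by case: (nat_of_ord F == nxt x).
Qed.

Lemma nxt_gt x : (f < x)%N ->
  nxt x = if (f.+1 <= x - f)%N then (x - f.+1)%N else (x - f - 1)%N.
Proof.
move=> h; rewrite /nxt /pp /qq /sA /sB (_ : (x == f) = false); last by apply/negbTE; lia.
by rewrite (_ : (x < f)%N = false) ?subn0 ?add0n //; lia.
Qed.

Lemma mv_gt x : (f < x)%N -> mv x = minn f.+1 (x - f).
Proof.
move=> h; rewrite /mv /pp /qq /sA /sB (_ : (x == f) = false); last by apply/negbTE; lia.
by rewrite (_ : (x < f)%N = false) ?subn0 //; lia.
Qed.

Lemma nxt_lt x : (x < f)%N ->
  nxt x = if (f - x <= n.+1 - f)%N then (n.+1 - (f - x))%N else (x + n.+1 - f)%N.
Proof.
move=> h; rewrite /nxt /pp /qq /sA /sB (_ : (x == f) = false); last by apply/negbTE; lia.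
rewrite h subSS; congr (if _ then _ else _); move: (ltn_ord f); lia.
Qed.

Lemma mv_lt x : (x < f)%N -> mv x = minn (f - x) (n.+1 - f).
Proof.
move=> h; rewrite /mv /pp /qq /sA /sB (_ : (x == f) = false); last by apply/negbTE; lia.
by rewrite h subSS.
Qed.

Lemma nxt_eq : nxt f = n.+1. Proof. by rewrite /nxt eqxx. Qed.
Lemma mv_eq : mv f = 0%N. Proof. by rewrite /mv eqxx. Qed.

Definition traj s := iter s nxt n.+1.

Lemma traj_inv s : Inv s (traj s).
Proof. elim: s => [|s IH]; [exact: Inv0 | exact: (Inv_step IH).1]. Qed.

Lemma mseq_traj s : mseq adj f s = mv (traj s).
Proof. exact: (Inv_step (traj_inv s)).2. Qed.

Lemma trajS s : traj s.+1 = nxt (traj s).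
Proof. by []. Qed.
End Dyn.
Local Close Scope ring_scope.
Unset Implicit Arguments.

Theorem proposition6 (n k : nat) (f : 'I_n) :
  (1 <= k)%N -> (2 * k - 1 <= n)%N -> nat_of_ord f = k.-1 ->
  let m := mseq (@chain_adj n) f in
  (k = 1%N -> forall s, m s = (if (s.+1 %% n.+1 == 0)%N then 0%N else 1%N)) /\
  ((2 <= k)%N -> forall l r, (1 <= l)%N -> (r <= k - 1)%N ->
     n = (l * k + r + (k - 1))%N ->
     ((r < k - 1)%N -> (forall s, (s < l)%N -> m s = k) /\ m l = r) /\
     (r = (k - 1)%N -> (3 <= k)%N ->
        (forall s, (s < l)%N -> m s = k) /\ m l = (k - 1)%N /\ m l.+1 = 1%N) /\
     (k = 2%N -> r = 1%N ->
        (forall s, (s < l)%N -> m s = 2%N) /\ m l = 1%N /\ m l.+1 = 1%N /\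
        (forall s, (l.+2 <= s < l.+2 + l)%N -> m s = 2%N) /\ m (l.+2 + l)%N = 0%N)).
Proof.
case: n f => [|n] f; first by case: f.
move=> hk hkn hf m.
have Mt : forall s, m s = mv f (traj f s) by move=> s; exact: mseq_traj.
have hfn := ltn_ord f.
split.
  move=> hk1; subst k; rewrite /= in hf.
  have T : forall j, (j <= n.+1)%N -> traj f j = (n.+1 - j)%N.
    elim=> [|j IH] hj //; rewrite trajS IH; last lia.
    rewrite nxt_gt hf; last lia.
    by rewrite ifT; lia.
  have P : forall q, iter (q * n.+2) (nxt f) n.+1 = n.+1.
    elim=> [|q IH] //; rewrite mulSn iterD IH.
    have := T n.+1 (leqnn _); rewrite subnn /traj => E.
    by rewrite iterS E -hf nxt_eq.
  move=> s; have E : traj f s = traj f (s %% n.+2) by rewrite /traj {1}(divn_eq s n.+2) addnC iterD P.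
  rewrite Mt E T; last first.
    by have := ltn_pmod s (ltn0Sn n.+1); lia.
  have hm : (s.+1 %% n.+2 == 0)%N = (s %% n.+2 == n.+1).
    rewrite -addn1 -modnDml; have := ltn_pmod s (ltn0Sn n.+1); move: (s %% n.+2) => j hj.
    case: (ltnP j n.+1) => hj2.
      rewrite modn_small; last lia.
      by apply/eqP/eqP; lia.
    by rewrite (_ : j = n.+1) ?addn1 ?modnn ?eqxx //; lia.
  rewrite hm; case: eqP => h.
    have -> : (n.+1 - s %% n.+2)%N = nat_of_ord f by rewrite hf; lia.
    exact: mv_eq.
  rewrite mv_gt hf; last by lia.
  lia.
move=> hk2 l r hl hr hn.
have hfk : nat_of_ord f = (k - 1)%N by lia.
have A : forall j, (j <= l)%N -> traj f j = (n.+1 - j * k)%N.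
  elim=> [|j IH] hj; first by rewrite mul0n subn0.
  rewrite trajS IH; last lia.
  have hjl : (j.+1 * k <= l * k)%N := leq_mul hj (leqnn k).
  rewrite mulSn in hjl; rewrite nxt_gt hfk; last lia.
  case: ifP => h; rewrite mulSn; lia.
have Ml : forall j, (j < l)%N -> m j = k.
  move=> j hj; rewrite Mt A; last lia.
  have hjl : (j.+1 * k <= l * k)%N := leq_mul hj (leqnn k).
  rewrite mulSn in hjl; rewrite mv_gt hfk; lia.
have Al : traj f l = (r + k - 1)%N by rewrite A //; lia.
have Ml1 : r = (k - 1)%N -> m l.+1 = 1%N.
  move=> hr1; rewrite Mt trajS Al nxt_gt hfk; last lia.
  case: ifP => h; first lia.
  rewrite mv_lt hfk; lia.
split.
  move=> hr1; split; first exact: Ml.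
  rewrite Mt Al; case: (posnP r) => hr0.
    by rewrite (_ : (r + k - 1)%N = nat_of_ord f) ?mv_eq //; lia.
  by rewrite mv_gt hfk; lia.
split.
  move=> hr1 hk3; split; first exact: Ml.
  split; last exact: Ml1.
  by rewrite Mt Al mv_gt hfk; lia.
move=> hk22 hr1; subst k r; split; first exact: Ml.
split; first by rewrite Mt Al mv_gt hfk.
split; first exact: Ml1.
have B : forall j, (j <= l)%N -> traj f (l.+2 + j) = (n - 2 * j)%N.
  elim=> [|j IH] hj.
    rewrite addn0 trajS trajS Al /=.
    rewrite (_ : (1 + 2 - 1)%N = 2) // (@nxt_gt _ _ 2) hfk //= (@nxt_lt _ _ 0) hfk //=; case: ifP => _; lia.
  rewrite addnS trajS IH; last lia.
  rewrite nxt_gt hfk /=; last lia.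
  case: ifP => h; lia.
split.
  move=> s /andP[hs1 hs2]; rewrite Mt (_ : s = (l.+2 + (s - l.+2))%N); last lia.
  by rewrite B; [rewrite mv_gt hfk /=; lia | lia].
rewrite Mt B // (_ : (n - 2 * l)%N = nat_of_ord f) ?mv_eq //; lia.
Qed.
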